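(* Fix $n\ge 1$ and finite sets $\mathsf{AP}^I_L$, $\mathsf{AP}^O$; let $\mathcal{I} = 2^{\mathsf{AP}^I_L\times\{0,\dots,n-1\}}$ and $\mathcal{O} = 2^{\mathsf{AP}^O\times\{0,\dots,n-1\}}$. Let $\tau : \mathcal{I}^*\to\mathcal{O}$ be a computation tree such that for every $t\in\mathcal{I}^*$, $\mathrm{rep}_S(t)$ divides $\mathrm{rep}_S(\tau(t))$ (where $\tau(t)$ is regarded as a word of length one). Then $\tau$ has a unique symmetric completion, and this symmetric completion has the symmetry property. Furthermore, if $\tau$ is regular, then so is its symmetric completion.
   Context: Modulo always returns a value in $\{0,\dots,n-1\}$. For a set $\mathsf{AP}$, $u \subseteq \mathsf{AP}\times\{0,\dots,n-1\}$ and $k\in\mathbb{Z}$, $\mathrm{rot}(u,k) = \{(p,(j+k)\bmod n)\mid (p,j)\in u\}$, extended letterwise to words. For such $x$, $\mathrm{rep}(x) = |\{j\in\{0,\dots,n-1\} \mid \mathrm{rot}(x,j)=x\}|$; for words, $\mathrm{rep}_S(\epsilon) = n$ and $\mathrm{rep}_S(w_0\dots w_l) = \gcd(\mathrm{rep}_S(w_0\dots w_{l-1}),\mathrm{rep}(w_l))$. A computation tree is a map $\tau:\mathcal{I}^*\to\mathcal{O}$; it has the symmetry property if $\tau(\mathrm{rot}(t,i)) = \mathrm{rot}(\tau(t),i)$ for all $t$ and $0\le i<n$; it is regular if the set of subtrees $t\mapsto\tau(\hat t t)$, $\hat t\in\mathcal{I}^*$, is finite. Fix the lexicographic order on $\mathcal{I}^*$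 induced by a total order on $\mathcal{I}$ (the lexicographic order of the tuple representation of letters), and let $\eta_S(t) = \min_{0\le i<n}\mathrm{rot}(t,i)$. A symmetric completion of $\tau$ is a tree $\tau'$ such that for every $t\in\mathcal{I}^*$, $\tau'(t) = \mathrm{rot}(\tau(\eta_S(t)),i)$ for some $i\in\mathbb{N}$ with $\mathrm{rot}(\eta_S(t),i) = t$. *)

(* Defs.v *)
From mathcomp Require Import all_boot.
Set Implicit Arguments. Unset Strict Implicit. Unset Printing Implicit Defensive.

Section Defs.
Variable n : nat.

(* (j + k) mod n as an element of {0,..,n-1}; 0 < n follows from j : 'I_n. *)
Definition rot_idx (j : 'I_n) (k : nat) : 'I_n :=
  Ordinal (ltn_pmod (j + k) (leq_ltn_trans (leq0n j) (ltn_ord j))).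

Definition letter (A : finType) := {set (A * 'I_n)}.
Definition word (A : finType) := seq (letter A).

Definition rotl (A : finType) (u : letter A) (k : nat) : letter A :=
  [set (x.1, rot_idx x.2 k) | x in u].

Definition rotw (A : finType) (w : word A) (k : nat) : word A :=
  map (fun u => rotl u k) w.

Definition rep (A : finType) (x : letter A) : nat :=
  #|[set j : 'I_n | rotl x j == x]|.

Definition repS (A : finType) (w : word A) : nat :=
  foldl (fun r x => gcdn r (rep x)) n w.

Fixpoint lexle (T : eqType) (le : rel T) (s1 s2 : seq T) : bool :=
  match s1, s2 with
  | [::], _ => true
  | _ :: _, [::] => false
  | x :: s, y :: t => if x == y then lexle le s t else le x y
  end.

Definition letter_tuple (A : finType) (u : letter A) : seq bool :=
  [seq (x \in u) | x <- enum {: A * 'I_n}].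

Definition letter_le (A : finType) : rel (letter A) :=
  fun u v => lexle (fun a b : bool => a <= b) (letter_tuple u) (letter_tuple v).

Definition word_le (A : finType) : rel (word A) := lexle (@letter_le A).

Definition word_min (A : finType) (w1 w2 : word A) : word A :=
  if word_le w1 w2 then w1 else w2.

Definition etaS (A : finType) (t : word A) : word A :=
  foldr (@word_min A) (rotw t 0) [seq rotw t i | i <- iota 0 n].

Definition ctree (AI AO : finType) := word AI -> letter AO.

Definition symmetry_property (AI AO : finType) (tau : ctree AI AO) : Prop :=
  forall (t : word AI) (i : nat), i < n -> tau (rotw t i) = rotl (tau t) i.

(* regular: finitely many subtrees t |-> tau (th ++ t) *)
Definition regular (AI AO : finType) (tau : ctree AI AO) : Prop :=
  exists (N : nat) (f : 'I_N -> ctree AI AO),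
    forall th : word AI, exists k : 'I_N, forall t, tau (th ++ t) = f k t.

Definition symmetric_completion (AI AO : finType) (tau tau' : ctree AI AO) : Prop :=
  forall t : word AI, exists i : nat,
    rotw (etaS t) i = t /\ tau' t = rotl (tau (etaS t)) i.

End Defs.

(* Main.v *)
Require Import Defs.
From mathcomp Require Import all_boot.
Set Implicit Arguments. Unset Strict Implicit. Unset Printing Implicit Defensive.

Section Lex.
Variables (T : eqType) (le : rel T).

Lemma lexle_refl s : lexle le s s.
Proof. by elim: s => //= x s IH; rewrite eqxx. Qed.

Lemma lexle_catl p s s' : lexle le (p ++ s) (p ++ s') = lexle le s s'.
Proof. by elim: p => //= x p IH; rewrite eqxx. Qed.

Lemma lexle_prefix p p' s s' : size p = size p' ->
  lexle le (p ++ s) (p' ++ s') -> lexle le p p'.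
Proof.
elim: p p' => [|x p IH] [|y p'] //= [Hs].
by case: (x == y) => //; apply: IH.
Qed.

Hypothesis anti : forall x y, le x y -> le y x -> x = y.
Hypothesis total : forall x y, le x y || le y x.
Hypothesis trans : forall x y z, le x y -> le y z -> le x z.

Lemma lexle_anti s t : lexle le s t -> lexle le t s -> s = t.
Proof.
elim: s t => [|x s IH] [|y t] //=.
case: eqP => [-> | Nxy]; first by rewrite eqxx => H1 H2; rewrite (IH t H1 H2).
rewrite eq_sym; case: eqP => [Eyx|_]; first by case: Nxy.
by move=> H1 H2; case: Nxy; apply: anti.
Qed.

Lemma lexle_total s t : lexle le s t || lexle le t s.
Proof.
elim: s t => [|x s IH] [|y t] //=.
case: (eqVneq x y) => [E|Nxy]; first by subst; apply: IH.
by apply: total.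
Qed.

Lemma lexle_trans s1 s2 s3 : lexle le s1 s2 -> lexle le s2 s3 -> lexle le s1 s3.
Proof.
elim: s1 s2 s3 => [|x s1 IH] [|y s2] [|z s3] //=.
case: eqP => [<-|Nxy].
  by case: eqP => // _; apply: IH.
case: eqP => [<-|Nyz]; first by case: eqP.
case: eqP => [Exz|_]; last by apply: trans.
by subst z => H1 H2; case: Nxy; apply: anti.
Qed.

End Lex.

Section Letters.
Variables (n : nat) (A : finType).

Lemma bool_anti (x y : bool) : x <= y -> y <= x -> x = y.
Proof. by case: x; case: y. Qed.
Lemma bool_total (x y : bool) : (x <= y) || (y <= x).
Proof. by case: x; case: y. Qed.
Lemma bool_trans (x y z : bool) : x <= y -> y <= z -> x <= z.
Proof. by case: x; case: y; case: z. Qed.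

Lemma letter_tuple_inj : injective (@letter_tuple n A).
Proof.
move=> u v /eq_in_map H; apply/setP => x; apply: H.
by rewrite mem_enum.
Qed.

Lemma letter_le_anti (u v : letter n A) : letter_le u v -> letter_le v u -> u = v.
Proof.
move=> H1 H2; apply: letter_tuple_inj.
exact: (lexle_anti bool_anti H1 H2).
Qed.
Lemma letter_le_total (u v : letter n A) : letter_le u v || letter_le v u.
Proof. exact: (lexle_total bool_total). Qed.
Lemma letter_le_trans (u v w : letter n A) :
  letter_le u v -> letter_le v w -> letter_le u w.
Proof. exact: (lexle_trans bool_anti bool_trans). Qed.

Lemma word_le_anti (u v : word n A) : word_le u v -> word_le v u -> u = v.
Proof. exact: (lexle_anti (@letter_le_anti)). Qed.
Lemma word_le_total (u v : word n A) : word_le u v || word_le v u.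
Proof. exact: (lexle_total (@letter_le_total)). Qed.
Lemma word_le_trans (u v w : word n A) :
  word_le u v -> word_le v w -> word_le u w.
Proof. exact: (lexle_trans (@letter_le_anti) (@letter_le_trans)). Qed.
Lemma word_le_refl (u : word n A) : word_le u u.
Proof. exact: lexle_refl. Qed.

Lemma foldr_min_mem (x0 : word n A) l : foldr (@word_min n A) x0 l \in x0 :: l.
Proof.
elim: l => [|a l IH] /=; first by rewrite mem_seq1.
rewrite /word_min; case: ifP => _; first by rewrite !inE eqxx orbT.
by move: IH; rewrite !inE => /orP [->|->]; rewrite ?orbT.
Qed.

Lemma foldr_min_le (x0 : word n A) l y : y \in x0 :: l ->
  word_le (foldr (@word_min n A) x0 l) y.
Proof.
elim: l y => [|a l IH] y /=; first by rewrite mem_seq1 => /eqP ->; apply: word_le_refl.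
rewrite /word_min !inE => Hy; case: ifP => Ha.
  case/or3P: Hy => [/eqP ->|/eqP ->|Hy]; last 2 first.
  - by apply: word_le_refl.
  - apply: word_le_trans Ha _; apply: IH; by rewrite inE Hy orbT.
  apply: word_le_trans Ha _; apply: IH; exact: mem_head.
case/or3P: Hy => [/eqP ->|/eqP ->|Hy].
- by apply: IH; exact: mem_head.
- by move: (word_le_total a (foldr (@word_min n A) x0 l)); rewrite Ha.
- by apply: IH; rewrite inE Hy orbT.
Qed.
End Letters.
Section Rot.
Variables (n : nat) (Hn : 0 < n) (A : finType).
Implicit Types (u x : letter n A) (w : word n A).

Lemma rotl_add u a b : rotl (rotl u a) b = rotl u (a + b).
Proof.
rewrite /rotl -imset_comp; apply: eq_imset => x /=; congr pair.
by apply: val_inj => /=; rewrite modnDml addnA.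
Qed.

Lemma rotl_mod u a : rotl u (a %% n) = rotl u a.
Proof.
rewrite /rotl; apply: eq_imset => x /=; congr pair.
by apply: val_inj => /=; rewrite modnDmr.
Qed.

Lemma rotl0 u : rotl u 0 = u.
Proof.
rewrite /rotl -[RHS]imset_id; apply: eq_imset => -[a j] /=; congr pair.
by apply: val_inj => /=; rewrite addn0 modn_small.
Qed.

Lemma rotl_n u : rotl u n = u.
Proof. by rewrite -rotl_mod modnn rotl0. Qed.

Lemma rotl_inv u k : rotl (rotl u k) (n - k %% n) = u.
Proof.
rewrite rotl_add -rotl_mod -modnDml subnKC; last exact: ltnW (ltn_pmod k Hn).
by rewrite modnn rotl0.
Qed.

Lemma rotw_add w a b : rotw (rotw w a) b = rotw w (a + b).
Proof. by rewrite /rotw -map_comp; apply: eq_map => u /=; rewrite rotl_add. Qed.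

Lemma rotw_mod w a : rotw w (a %% n) = rotw w a.
Proof. by apply: eq_map => u /=; rewrite rotl_mod. Qed.

Lemma rotw0 w : rotw w 0 = w.
Proof. by rewrite /rotw (eq_map (@rotl0)) map_id. Qed.

Lemma rotw_inv w k : rotw (rotw w k) (n - k %% n) = w.
Proof. by rewrite /rotw -map_comp (eq_map (fun u => rotl_inv u k)) map_id. Qed.

Lemma rotw_cat w1 w2 k : rotw (w1 ++ w2) k = rotw w1 k ++ rotw w2 k.
Proof. exact: map_cat. Qed.

Lemma size_rotw w k : size (rotw w k) = size w.
Proof. exact: size_map. Qed.

Lemma rotw_fix w d : rotw w d = w -> forall x, x \in w -> rotl x d = x.
Proof.
elim: w => [|y w IH] //= [E1 E2] x; rewrite inE => /orP [/eqP ->|]//.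
exact: IH.
Qed.

Lemma rotl_mul u m q : rotl u m = u -> rotl u (q * m) = u.
Proof.
move=> Hm; elim: q => [|q IH]; first by rewrite mul0n rotl0.
by rewrite mulSn -rotl_add Hm IH.
Qed.

Lemma period u : exists m, [/\ 0 < m, m %| n & forall j, (rotl u j == u) = (m %| j)].
Proof.
have Ex : exists m, (0 < m) && (rotl u m == u) by exists n; rewrite Hn rotl_n eqxx.
case: (ex_minnP Ex) => m /andP [m0 /eqP Hm] Hmin.
have key : forall j, (rotl u j == u) = (m %| j).
  move=> j; rewrite {1}(divn_eq j m) -rotl_add rotl_mul //.
  apply/idP/idP => [/eqP Hj|]; last by rewrite /dvdn => /eqP ->; rewrite rotl0.
  rewrite /dvdn; case: (posnP (j %% m)) => [_//|Hp].
  have := Hmin _ (introT andP (conj Hp (introT eqP Hj))).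
  by rewrite leqNgt ltn_pmod.
exists m; split => //; by rewrite -key rotl_n.
Qed.

Lemma card_mult m : 0 < m -> m %| n -> #|[set j : 'I_n | m %| j]| = n %/ m.
Proof.
move=> m0 Hmn.
have lt k : k < n %/ m -> k * m < n.
  by move=> Hk; rewrite -[X in _ < X](divnK Hmn) ltn_pmul2r.
pose f (k : 'I_(n %/ m)) : 'I_n := Ordinal (lt _ (ltn_ord k)).
have finj : injective f.
  by move=> k1 k2 /(congr1 val) /= /eqP; rewrite eqn_pmul2r // => /eqP /val_inj.
have -> : [set j : 'I_n | m %| j] = f @: setT.
  apply/setP => j; rewrite inE; apply/idP/imsetP => [Hj|[k _ ->]]; last first.
    by rewrite /= dvdn_mull.
  have Hk : j %/ m < n %/ m.
    by rewrite ltn_divLR // divnK.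
  exists (Ordinal Hk) => //; apply: val_inj => /=; by rewrite divnK.
by rewrite card_imset // cardsT card_ord.
Qed.

Lemma rep_fix u d : (rotl u d == u) = (n %| rep u * d).
Proof.
case: (period u) => m [m0 Hmn Hj].
have -> : rep u = n %/ m.
  rewrite /rep -(card_mult m0 Hmn); apply: eq_card => j; by rewrite !inE Hj.
have q0 : 0 < n %/ m by rewrite divn_gt0 // dvdn_leq.
by rewrite Hj -[X in _ = (X %| _)](divnK Hmn) dvdn_pmul2l.
Qed.

Lemma foldl_fix w d r : n %| r * d -> (forall x, x \in w -> rotl x d = x) ->
  n %| foldl (fun r x => gcdn r (@rep n A x)) r w * d.
Proof.
elim: w r => [|y w IH] r Hr Hw //=.
apply: IH => [|x Hx]; last by apply: Hw; rewrite inE Hx orbT.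
rewrite muln_gcdl dvdn_gcd Hr /= -rep_fix; apply/eqP; apply: Hw; exact: mem_head.
Qed.

Lemma repS_fix w d : (forall x, x \in w -> rotl x d = x) -> n %| repS w * d.
Proof. by apply: foldl_fix; apply: dvdn_mulr. Qed.

End Rot.

From Stdlib Require Import ClassicalEpsilon.

Section Main.
Variables (API APO : finType) (n : nat) (Hn : 0 < n) (tau : ctree n API APO).
Hypothesis Htau : forall t : word n API, repS t %| repS [:: tau t].

Lemma stab w d : rotw w d = w -> rotl (tau w) d = tau w.
Proof.
move=> E; have H1 := repS_fix Hn (rotw_fix E).
apply/eqP; rewrite (rep_fix Hn); apply: dvdn_trans H1 _; apply: dvdn_mul => //.
apply: dvdn_trans (Htau w) _; rewrite /repS /=; exact: dvdn_gcdr.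
Qed.

Lemma stab2 w a b : rotw w a = rotw w b -> rotl (tau w) a = rotl (tau w) b.
Proof.
move=> E; set c := n - b %% n.
have Ec : rotw w (a + c) = w by rewrite -rotw_add E (rotw_inv Hn).
have R : rotl (tau w) (a + b + c) = rotl (tau w) b by rewrite addnAC -rotl_add (stab Ec).
by rewrite -R -rotl_add -rotl_add (rotl_inv Hn).
Qed.

Lemma etaS_mem (t : word n API) : exists2 i, i < n & etaS t = rotw t i.
Proof.
have := foldr_min_mem (rotw t 0) [seq rotw t i | i <- iota 0 n].
rewrite -/(etaS t) inE => /orP [/eqP ->|/mapP [i]]; first by exists 0.
by rewrite mem_iota add0n => /andP [_ Hi] ->; exists i.
Qed.

Lemma etaS_le (t : word n API) i : word_le (etaS t) (rotw t i).
Proof.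
rewrite -rotw_mod; apply: foldr_min_le; rewrite inE; apply/orP; right.
by apply/mapP; exists (i %% n); rewrite // mem_iota add0n ltn_pmod.
Qed.

Lemma etaS_char (t e : word n API) : (exists i, e = rotw t i) ->
  (forall i, word_le e (rotw t i)) -> e = etaS t.
Proof.
move=> [i ->] H; case: (etaS_mem t) => i0 _ E0.
apply: word_le_anti; last exact: etaS_le.
by rewrite E0; apply: H.
Qed.

Lemma etaS_rot (t : word n API) k : etaS (rotw t k) = etaS t.
Proof.
symmetry; apply: etaS_char.
  case: (etaS_mem t) => i0 _ ->; exists ((n - k %% n) + i0).
  by rewrite -rotw_add (rotw_inv Hn).
by move=> i; rewrite rotw_add; apply: etaS_le.
Qed.

Lemma etaS_prefix (th t : word n API) j :
  etaS (th ++ t) = rotw (th ++ t) j -> rotw th j = etaS th.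
Proof.
move=> E; case: (etaS_mem th) => i0 _ E0.
apply: word_le_anti; last exact: etaS_le.
have := etaS_le (th ++ t) i0; rewrite E !rotw_cat -E0 => Hle; apply: (lexle_prefix _ Hle).
by rewrite E0 !size_rotw.
Qed.

Definition Jset (th : word n API) := [set j : 'I_n | rotw th j == etaS th].

Lemma reg_core (tau' : ctree n API APO) : symmetric_completion tau tau' ->
  forall th1 th2, Jset th1 = Jset th2 ->
  (forall s, tau (etaS th1 ++ s) = tau (etaS th2 ++ s)) ->
  forall t, tau' (th1 ++ t) = tau' (th2 ++ t).
Proof.
move=> H th1 th2 HJ Ht t.
case: (etaS_mem (th1 ++ t)) => j1 lt1 E1.
have A1 := etaS_prefix E1.
have inJ : Ordinal lt1 \in Jset th2 by rewrite -HJ inE /= A1.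
have A2 : rotw th2 j1 = etaS th2 by move: inJ; rewrite inE => /eqP.
have E2 : etaS (th2 ++ t) = rotw (th2 ++ t) j1.
  symmetry; apply: etaS_char; first by exists j1.
  move=> i; apply: word_le_trans (etaS_le _ i).
  case: (etaS_mem (th2 ++ t)) => j2 lt2 F2.
  have B2 := etaS_prefix F2.
  have inJ2 : Ordinal lt2 \in Jset th1 by rewrite HJ inE /= B2.
  have B1 : rotw th1 j2 = etaS th1 by move: inJ2; rewrite inE => /eqP.
  have := etaS_le (th1 ++ t) j2.
  rewrite E1 !rotw_cat A1 B1 /word_le lexle_catl => Hle.
  by rewrite F2 !rotw_cat A2 B2 /word_le lexle_catl.
case: (H (th1 ++ t)) => i1 [I1 ->]; case: (H (th2 ++ t)) => i2 [I2 ->].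
have R1 : rotl (tau (etaS (th1 ++ t))) i1 = rotl (tau (etaS (th1 ++ t))) (n - j1 %% n).
  by apply: stab2; rewrite I1 E1 (rotw_inv Hn).
have R2 : rotl (tau (etaS (th2 ++ t))) i2 = rotl (tau (etaS (th2 ++ t))) (n - j1 %% n).
  by apply: stab2; rewrite I2 E2 (rotw_inv Hn).
by rewrite R1 R2 E1 E2 !rotw_cat A1 A2 Ht.
Qed.

End Main.

Theorem lemma8 (API APO : finType) (n : nat) (Hn : 0 < n)
    (tau : ctree n API APO) :
  (forall t : word n API, repS t %| repS [:: tau t]) ->
  (exists tau' : ctree n API APO, symmetric_completion tau tau')
  /\ (forall tau1 tau2 : ctree n API APO,
        symmetric_completion tau tau1 -> symmetric_completion tau tau2 ->
        forall t, tau1 t = tau2 t)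
  /\ (forall tau' : ctree n API APO,
        symmetric_completion tau tau' -> symmetry_property tau')
  /\ (regular tau -> forall tau' : ctree n API APO,
        symmetric_completion tau tau' -> regular tau').
Proof.
move=> Htau; split; [|split; [|split]].
- have Ex : forall t : word n API, exists i, rotw (etaS t) i == t.
    move=> t; case: (etaS_mem Hn t) => i _ ->; exists (n - i %% n).
    by rewrite (rotw_inv Hn).
  exists (fun t => rotl (tau (etaS t)) (ex_minn (Ex t))).
  move=> t; case: ex_minnP => i /eqP Hi _; by exists i.
- move=> t1 t2 H1 H2 t; case: (H1 t) => i1 [E1 ->]; case: (H2 t) => i2 [E2 ->].
  by apply: (stab2 Hn Htau); rewrite E1 E2.
- move=> tau' H t k _.
  case: (H t) => i [Ei ->]; case: (H (rotw t k)) => i' [].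
  rewrite (etaS_rot Hn) => Ei' ->.
  rewrite rotl_add; apply: (stab2 Hn Htau); by rewrite Ei' -rotw_add Ei.
- move=> [N [f Hreg]] tau' H.
  have inh : inhabited 'I_N by case: (Hreg [::]) => k _; exact: inhabits k.
  pose kf th := epsilon inh (fun k => forall t, tau (etaS th ++ t) = f k t).
  have Hkf : forall th t, tau (etaS th ++ t) = f (kf th) t.
    by move=> th; apply: (epsilon_spec inh (fun k => forall t, tau (etaS th ++ t) = f k t)).
  pose T := ({set 'I_n} * 'I_N)%type.
  pose D th : T := (Jset th, kf th).
  pose rp (d : T) := epsilon (inhabits ([::] : word n API)) (fun th => D th = d).
  have Hrp : forall th, D (rp (D th)) = D th.
    by move=> th; apply: (epsilon_spec _ (fun th' => D th' = D th)); exists th.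
  exists #|{: T}|, (fun i t => tau' (rp (enum_val i) ++ t)).
  move=> th; exists (enum_rank (D th)) => t; rewrite enum_rankK.
  apply: (reg_core Hn Htau H).
    by have := congr1 fst (Hrp th).
  move=> s; rewrite !Hkf; by have := congr1 snd (Hrp th); rewrite /= => ->.
Qed.
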